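(* Let $M$ be a monoidal category which admits functorial inverses. Then for any choice of functorial inverses $i:M\to M$ there is a natural isomorphism $i^2(x)\cong x$.
   Context: A monoidal category $M$ admits functorial inverses if there exist a functor $i:M\to M$ and a natural isomorphism $x\otimes i(x)\cong 1$; a choice of functorial inverses is a specific such functor and natural isomorphism. *)

(* Defs.v *)
Set Implicit Arguments.
Unset Strict Implicit.

Record Category := {
  ob :> Type;
  hom : ob -> ob -> Type;
  idm : forall a, hom a a;
  comp : forall a b c, hom b c -> hom a b -> hom a c;
  comp_id_l : forall a b (f : hom a b), comp (idm b) f = f;
  comp_id_r : forall a b (f : hom a b), comp f (idm a) = f;
  comp_assoc : forall a b c d (h : hom c d) (g : hom b c) (f : hom a b),
      comp h (comp g f) = comp (comp h g) f
}.
Arguments idm {C} a : rename.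
Arguments comp {C a b c} _ _ : rename.
Arguments hom {C} _ _ : rename.

Definition is_iso (C : Category) (a b : C) (f : hom a b) : Prop :=
  exists g : hom b a, comp g f = idm a /\ comp f g = idm b.

Record Functor (C D : Category) := {
  fob :> C -> D;
  fmap : forall a b, hom a b -> hom (fob a) (fob b);
  fmap_id : forall a, fmap (idm a) = idm (fob a);
  fmap_comp : forall a b c (g : hom b c) (f : hom a b),
      fmap (comp g f) = comp (fmap g) (fmap f)
}.
Arguments fmap {C D} _ {a b} _.

Definition id_functor (C : Category) : Functor C C.
Proof.
  refine {| fob := fun x => x; fmap := fun a b f => f |}; reflexivity.
Defined.

Definition comp_functor (C D E : Category) (G : Functor D E) (F : Functor C D)
  : Functor C E.
Proof.
  refine {| fob := fun x => G (F x); fmap := fun a b f => fmap G (fmap F f) |}.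
  - intro a. rewrite !fmap_id. reflexivity.
  - intros a b c g f. rewrite !fmap_comp. reflexivity.
Defined.

Definition nat_iso_exists (C D : Category) (F G : Functor C D) : Prop :=
  exists alpha : forall x : C, hom (F x) (G x),
    (forall x, is_iso (alpha x)) /\
    (forall (x y : C) (f : hom x y),
        comp (alpha y) (fmap F f) = comp (fmap G f) (alpha x)).

Record MonoidalCategory := {
  mcat :> Category;
  tens : mcat -> mcat -> mcat;
  tensm : forall a b a' b', hom a a' -> hom b b' -> hom (tens a b) (tens a' b');
  tensm_id : forall a b, tensm (idm a) (idm b) = idm (tens a b);
  tensm_comp : forall a b a' b' a'' b''
      (f' : hom a' a'') (g' : hom b' b'') (f : hom a a') (g : hom b b'),
      tensm (comp f' f) (comp g' g) = comp (tensm f' g') (tensm f g);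
  munit : mcat;
  assoc : forall a b c, hom (tens (tens a b) c) (tens a (tens b c));
  assoc_iso : forall a b c, is_iso (assoc a b c);
  assoc_nat : forall a b c a' b' c' (f : hom a a') (g : hom b b') (h : hom c c'),
      comp (assoc a' b' c') (tensm (tensm f g) h)
      = comp (tensm f (tensm g h)) (assoc a b c);
  lunit : forall a, hom (tens munit a) a;
  lunit_iso : forall a, is_iso (lunit a);
  lunit_nat : forall a b (f : hom a b),
      comp (lunit b) (tensm (idm munit) f) = comp f (lunit a);
  runit : forall a, hom (tens a munit) a;
  runit_iso : forall a, is_iso (runit a);
  runit_nat : forall a b (f : hom a b),
      comp (runit b) (tensm f (idm munit)) = comp f (runit a);
  pentagon : forall a b c d,
      comp (assoc a b (tens c d)) (assoc (tens a b) c d)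
      = comp (tensm (idm a) (assoc b c d))
             (comp (assoc a (tens b c) d) (tensm (assoc a b c) (idm d)));
  triangle : forall a b,
      comp (tensm (idm a) (lunit b)) (assoc a munit b)
      = tensm (runit a) (idm b)
}.
Arguments tens {m} _ _.
Arguments tensm {m a b a' b'} _ _.
Arguments munit {m}.

(** A choice of functorial inverses: a functor [i : M -> M] together with a
    natural isomorphism [e : x ⊗ i(x) ≅ 1] (natural in x, the target being the
    constant functor at the unit, which sends every morphism to [idm 1]). *)
Arguments Functor : clear implicits.
Definition is_functorial_inverses (M : MonoidalCategory) (i : Functor M M)
  (e : forall x : M, hom (tens x (i x)) munit) : Prop :=
  (forall x, is_iso (e x)) /\
  (forall (x y : M) (f : hom x y),
      comp (e y) (tensm f (fmap i f)) = comp (idm munit) (e x)).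

Arguments is_functorial_inverses {M} i e.

Definition admits_functorial_inverses (M : MonoidalCategory) : Prop :=
  exists (i : Functor M M) (e : forall x : M, hom (tens x (i x)) munit),
    is_functorial_inverses i e.
Arguments comp_functor {C D E} G F.
Arguments id_functor C : assert.
Arguments nat_iso_exists {C D} F G.

(* Main.v *)
Require Import Defs.
From Stdlib Require Import ClassicalEpsilon.

Definition inv {C : Category} {a b : C} {f : hom a b} (H : is_iso f) : hom b a :=
  proj1_sig (constructive_indefinite_description _ H).

Lemma inv_l (C : Category) (a b : C) (f : hom a b) (H : is_iso f) :
  comp (inv H) f = idm a.
Proof. unfold inv; destruct (constructive_indefinite_description _ H) as [g [? ?]]; auto. Qed.
Lemma inv_r (C : Category) (a b : C) (f : hom a b) (H : is_iso f) :
  comp f (inv H) = idm b.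
Proof. unfold inv; destruct (constructive_indefinite_description _ H) as [g [? ?]]; auto. Qed.
Lemma inv_iso (C : Category) (a b : C) (f : hom a b) (H : is_iso f) : is_iso (inv H).
Proof. exists f; split; [apply inv_r|apply inv_l]. Qed.

Lemma iso_comp (C : Category) (a b c : C) (g : hom b c) (f : hom a b) :
  is_iso g -> is_iso f -> is_iso (comp g f).
Proof.
  intros [g' [H1 H2]] [f' [H3 H4]]. exists (comp f' g'); split.
  - rewrite <- comp_assoc, (comp_assoc g' g f), H1, comp_id_l; auto.
  - rewrite <- comp_assoc, (comp_assoc f f' g'), H4, comp_id_l; auto.
Qed.

Lemma iso_tens (M : MonoidalCategory) (a b a' b' : M) (f : hom a a') (g : hom b b') :
  is_iso f -> is_iso g -> is_iso (tensm f g).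
Proof.
  intros [f' [H1 H2]] [g' [H3 H4]]. exists (tensm f' g'); split.
  - rewrite <- tensm_comp, H1, H3, tensm_id; auto.
  - rewrite <- tensm_comp, H2, H4, tensm_id; auto.
Qed.

Lemma iso_id (C : Category) (a : C) : is_iso (idm a).
Proof. exists (idm a); split; apply comp_id_l. Qed.

Lemma inv_nat (C : Category) (A1 B1 A2 B2 : C) (a1 : hom A1 B1) (b1 : hom B1 A1)
  (a2 : hom A2 B2) (b2 : hom B2 A2) (u : hom A1 A2) (v : hom B1 B2) :
  comp a1 b1 = idm B1 -> comp b2 a2 = idm A2 ->
  comp a2 u = comp v a1 -> comp b2 v = comp u b1.
Proof.
  intros H1 H2 H.
  rewrite <- (comp_id_r (comp b2 v)), <- H1, comp_assoc, <- (comp_assoc b2 v a1), <- H,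
    comp_assoc, H2, comp_id_l; reflexivity.
Qed.

Theorem lemma3p12 (M : MonoidalCategory) :
  admits_functorial_inverses M ->
  forall (i : Functor M M) (e : forall x : M, hom (tens x (i x)) munit),
    is_functorial_inverses i e ->
    nat_iso_exists (comp_functor i i) (id_functor M).
Proof.
  intros _ i e [Hiso Hnat].
  pose (li := fun x : M => inv (lunit_iso x)).
  pose (ei := fun x : M => inv (Hiso x)).
  exists (fun x => comp (runit x)
     (comp (tensm (idm x) (e (i x)))
       (comp (assoc x (i x) (i (i x)))
         (comp (tensm (ei x) (idm (i (i x)))) (li (i (i x))))))).
  split.
  - intro x. repeat apply iso_comp; try apply iso_tens; try apply iso_id;
      try apply runit_iso; try apply assoc_iso; try apply Hiso; apply inv_iso.
  - intros x y f. simpl.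
    set (h := fmap i f). set (g := fmap i h).
    assert (S1 : comp (li (i (i y))) g = comp (tensm (idm munit) g) (li (i (i x)))).
    { apply inv_nat with (a1 := lunit _) (a2 := lunit _); try apply inv_r; try apply inv_l.
      apply lunit_nat. }
    assert (S2 : comp (ei y) (idm munit) = comp (tensm f h) (ei x)).
    { apply inv_nat with (a1 := e x) (a2 := e y); try apply inv_r; try apply inv_l.
      apply Hnat. }
    assert (S4 : comp (e (i y)) (tensm h g) = e (i x)).
    { unfold g; rewrite (Hnat _ _ h). apply comp_id_l. }
    rewrite <- !comp_assoc, S1.
    rewrite (comp_assoc (tensm (ei y) (idm _))), <- tensm_comp, S2, comp_id_l.
    rewrite <- (comp_id_r g), tensm_comp, <- !comp_assoc.
    rewrite (comp_assoc (assoc _ _ _)), assoc_nat.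
    rewrite <- !comp_assoc, (comp_assoc (tensm (idm y) _)), <- tensm_comp, comp_id_l, S4.
    rewrite <- (comp_id_r f), <- (comp_id_l (e (i x))), tensm_comp.
    rewrite !comp_assoc, runit_nat, !comp_id_r, !comp_id_l. reflexivity.
Qed.
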